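(* Let $(a_n)$ be positive reals and $(b_n)$ nonzero complex numbers. Suppose there are constants $0<\nu_0<\nu_1<\nu_2<1$ with $$a_{n+1}/a_n<\nu_0\quad\text{and}\quad \nu_1<|b_{n+1}/b_n|<\nu_2\quad\text{for all }n\in\mathbb{N}.$$ Then $\pi\in\ell^\infty$ and $\Phi$ spatially exponentially decays.
   Context: $\pi_n:=2\prod_{m\ge1,\,m\ne n}\frac{1+a_m/a_n}{1-a_m/a_n}$. $\Phi=[\phi_{ij}]_{i,j\ge1}$ with $\phi_{ij}:=\frac{|b_i/b_j|}{1+a_i/a_j}$. $\Phi$ spatially exponentially decays if there are $C>0$, $\mu\in(0,1)$ with $\phi_{ij}\le C\mu^{|i-j|}$ for all $i,j\in\mathbb{N}$. *)

(* Defs.v *)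
From Stdlib Require Import Reals Lra Arith.
From Coquelicot Require Export Coquelicot.
Open Scope R_scope.

(* Indices: the paper's sequences are indexed by m >= 1; we index by nat
   starting at 0 (a pure relabelling m |-> m-1). *)

Fixpoint prod_upto (f : nat -> R) (N : nat) : R :=
  match N with
  | O => f O
  | S k => prod_upto f k * f (S k)
  end.

Definition pi_factor (a : nat -> R) (n m : nat) : R :=
  if Nat.eqb m n then 1 else (1 + a m / a n) / (1 - a m / a n).

Definition pi_partial (a : nat -> R) (n N : nat) : R :=
  2 * prod_upto (pi_factor a n) N.

Definition pi_seq (a : nat -> R) (n : nat) : R :=
  real (Lim_seq (pi_partial a n)).

Definition phi (a : nat -> R) (b : nat -> C) (i j : nat) : R :=
  Cmod (Cdiv (b i) (b j)) / (1 + a i / a j).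

Definition nat_absdiff (i j : nat) : nat := Nat.max i j - Nat.min i j.

Definition spatially_exp_decays (Phi : nat -> nat -> R) : Prop :=
  exists C mu : R, 0 < C /\ 0 < mu < 1 /\
    forall i j : nat, Phi i j <= C * mu ^ (nat_absdiff i j).

Definition pi_in_linfty (a : nat -> R) : Prop :=
  (forall n, ex_finite_lim_seq (pi_partial a n)) /\
  exists M : R, forall n, Rabs (pi_seq a n) <= M.

(* Main.v *)
Require Import Defs.
From Stdlib Require Import Reals Lra Lia Psatz.
From Coquelicot Require Import Coquelicot.
Open Scope R_scope.

Definition wgt (nu0 : R) (n m : nat) : R :=
  if Nat.ltb m n then nu0 ^ (n - m) else nu0 ^ (m - n).

Fixpoint sumw (w : nat -> R) (N : nat) : R :=
  match N with O => w O | S k => sumw w k + w (S k) end.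

Lemma wgt_le (nu0 : R) n m : (m <= n)%nat -> wgt nu0 n m = nu0 ^ (n - m).
Proof.
  intro H; unfold wgt. destruct (Nat.ltb_spec m n); [reflexivity|].
  replace (n - m)%nat with 0%nat by lia; replace (m - n)%nat with 0%nat by lia; reflexivity.
Qed.

Lemma wgt_ge (nu0 : R) n m : (n <= m)%nat -> wgt nu0 n m = nu0 ^ (m - n).
Proof.
  intro H; unfold wgt. destruct (Nat.ltb_spec m n); [lia|reflexivity].
Qed.

Lemma sumw_low nu0 n : 0 < nu0 < 1 -> forall N, (N <= n)%nat ->
  sumw (wgt nu0 n) N <= nu0 ^ (n - N) / (1 - nu0).
Proof.
  intros Hn. induction N as [|N IH]; intros HN; simpl.
  - rewrite wgt_le by lia. replace (n-0)%nat with n by lia.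
    assert (0 < nu0 ^ n) by (apply pow_lt; lra).
    apply (Rmult_le_reg_r (1 - nu0)); [lra|]. field_simplify; nra.
  - rewrite wgt_le by lia. specialize (IH ltac:(lia)).
    replace (n - N)%nat with (S (n - S N)) in IH by lia. simpl in IH.
    set (p := nu0 ^ (n - S N)) in *.
    assert (p / (1 - nu0) = nu0 * p / (1 - nu0) + p) by (field; lra). lra.
Qed.

Lemma sumw_high nu0 n : 0 < nu0 < 1 -> forall k,
  sumw (wgt nu0 n) (n + k) <= (1 + nu0 - nu0 ^ (k + 1)) / (1 - nu0).
Proof.
  intros Hn. induction k as [|k IH].
  - rewrite Nat.add_0_r. eapply Rle_trans; [apply sumw_low; auto|].
    replace (n - n)%nat with 0%nat by lia. simpl. right; field; lra.
  - rewrite Nat.add_succ_r. simpl. rewrite wgt_ge by lia.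
    replace (S (n + k) - n)%nat with (S k) by lia.
    replace (k + 1)%nat with (S k) in IH by lia.
    set (q := nu0 ^ S k) in *.
    assert ((1 + nu0 - nu0 * q) / (1 - nu0) = (1 + nu0 - q) / (1 - nu0) + q) by (field; lra).
    replace (nu0 ^ (k + 1)) with q by (unfold q; replace (k + 1)%nat with (S k) by lia; reflexivity). lra.
Qed.

Lemma pow_le1 x k : 0 <= x <= 1 -> x ^ k <= 1.
Proof.
  intros Hx; induction k; simpl; [lra|].
  assert (0 <= x ^ k) by (apply pow_le; lra). nra.
Qed.

Lemma sumw_bound nu0 n N : 0 < nu0 < 1 -> sumw (wgt nu0 n) N <= 2 / (1 - nu0).
Proof.
  intros Hn. destruct (Nat.le_gt_cases N n).
  - eapply Rle_trans; [apply sumw_low; auto|].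
    assert (nu0 ^ (n - N) <= 1) by (apply pow_le1; lra).
    apply Rmult_le_compat_r; [apply Rlt_le, Rinv_0_lt_compat; lra| lra].
  - replace N with (n + (N - n))%nat by lia.
    eapply Rle_trans; [apply sumw_high; auto|].
    assert (0 <= nu0 ^ (N - n + 1)) by (apply pow_le; lra).
    apply Rmult_le_compat_r; [apply Rlt_le, Rinv_0_lt_compat; lra| lra].
Qed.

Lemma ratio_a (a : nat -> R) nu0 (ha : forall n, 0 < a n)
  (hA : forall n, a (S n) / a n < nu0) : forall k m, a ((m + k)%nat) <= nu0 ^ k * a m.
Proof.
  induction k as [|k IH]; intros m.
  - rewrite Nat.add_0_r; simpl; lra.
  - rewrite Nat.add_succ_r. specialize (hA ((m + k)%nat)). specialize (IH m).
    pose proof (ha ((m+k)%nat)).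
    assert (a (S (m + k)) < nu0 * a ((m + k)%nat)).
    { apply (Rmult_lt_reg_r (/ a ((m+k)%nat))); [apply Rinv_0_lt_compat; lra|].
      replace (nu0 * a ((m + k)%nat) * / a ((m + k)%nat)) with nu0 by (field; lra). exact hA. }
    simpl. assert (0 <= nu0).
    { assert (0 < a (S (m+k)) / a ((m+k)%nat)) by (apply Rdiv_lt_0_compat; auto). lra. }
    nra.
Qed.

Lemma frac_bound nu0 y t : 0 < nu0 < 1 -> 0 < y -> y <= t -> t <= nu0 ->
  1 <= (1 + y) / (1 - y) <= exp (2 / (1 - nu0) * t).
Proof.
  intros Hn Hy Hyt Ht. split.
  - apply (Rmult_le_reg_r (1 - y)); [lra|]. field_simplify; lra.
  - eapply Rle_trans; [|apply exp_ineq1_le].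
    apply (Rmult_le_reg_r (1 - y)); [lra|].
    replace ((1 + y) / (1 - y) * (1 - y)) with (1 + y) by (field; lra).
    replace ((1 + 2 / (1 - nu0) * t) * (1 - y)) with (1 - y + 2 * t * ((1 - y) / (1 - nu0))) by (field; lra).
    assert (1 <= (1 - y) / (1 - nu0)).
    { apply (Rmult_le_reg_r (1 - nu0)); [lra|]. field_simplify; lra. }
    nra.
Qed.

Lemma pow_S_le x j : 0 <= x <= 1 -> x ^ S j <= x.
Proof. intros Hx. simpl. assert (x ^ j <= 1) by (apply pow_le1; lra).
  assert (0 <= x ^ j) by (apply pow_le; lra). nra. Qed.

Lemma factor_bound (a : nat -> R) nu0 (ha : forall n, 0 < a n) (Hn : 0 < nu0 < 1)
  (hA : forall n, a (S n) / a n < nu0) n m :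
  Rabs (pi_factor a n m) <= exp (2 / (1 - nu0) * wgt nu0 n m) /\
  ((n < m)%nat -> 1 <= pi_factor a n m).
Proof.
  assert (Hc : 0 < 2 / (1 - nu0)) by (apply Rdiv_lt_0_compat; lra).
  destruct (Nat.lt_total m n) as [Hlt|[Heq|Hgt]].
  - split; [|lia]. unfold pi_factor. destruct (Nat.eqb_spec m n); [lia|].
    rewrite wgt_le by lia.
    pose proof (ratio_a a nu0 ha hA (n - m) m) as R. replace (m + (n - m))%nat with n in R by lia.
    pose proof (ha n); pose proof (ha m).
    set (y := a n / a m).
    assert (Hy0 : 0 < y) by (apply Rdiv_lt_0_compat; auto).
    assert (Hyt : y <= nu0 ^ (n - m)).
    { unfold y. apply (Rmult_le_reg_r (a m)); auto. field_simplify; lra. }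
    assert (Htn : nu0 ^ (n - m) <= nu0).
    { replace (n - m)%nat with (S (n - m - 1)) by lia. apply pow_S_le; lra. }
    destruct (frac_bound nu0 y _ Hn Hy0 Hyt Htn) as [F1 F2].
    assert (Hne : a m - a n <> 0).
    { intro E. assert (y = 1) by (unfold y; replace (a m) with (a n) by lra; field; lra). lra. }
    replace ((1 + a m / a n) / (1 - a m / a n)) with (- ((1 + y) / (1 - y))).
    + rewrite Rabs_Ropp, Rabs_right by lra. exact F2.
    + unfold y. field. repeat split; try lra.
  - subst m. unfold pi_factor. rewrite Nat.eqb_refl. rewrite Rabs_R1. split; [|lia].
    unfold wgt. rewrite Nat.ltb_irrefl, Nat.sub_diag. simpl.
    pose proof (exp_ineq1_le (2 / (1 - nu0) * 1)). lra.
  - unfold pi_factor. destruct (Nat.eqb_spec m n); [lia|].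
    rewrite wgt_ge by lia.
    pose proof (ratio_a a nu0 ha hA (m - n) n) as R. replace (n + (m - n))%nat with m in R by lia.
    pose proof (ha n); pose proof (ha m).
    set (y := a m / a n).
    assert (Hy0 : 0 < y) by (apply Rdiv_lt_0_compat; auto).
    assert (Hyt : y <= nu0 ^ (m - n)).
    { unfold y. apply (Rmult_le_reg_r (a n)); auto. field_simplify; lra. }
    assert (Htn : nu0 ^ (m - n) <= nu0).
    { replace (m - n)%nat with (S (m - n - 1)) by lia. apply pow_S_le; lra. }
    destruct (frac_bound nu0 y _ Hn Hy0 Hyt Htn) as [F1 F2].
    split; [|intros; exact F1]. rewrite Rabs_right by lra. exact F2.
Qed.

Lemma pi_part (a : nat -> R) nu0 (ha : forall n, 0 < a n) (Hn : 0 < nu0 < 1)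
  (hA : forall n, a (S n) / a n < nu0) : pi_in_linfty a.
Proof.
  set (c := 2 / (1 - nu0)).
  assert (Hc : 0 < c) by (apply Rdiv_lt_0_compat; lra).
  set (M := 2 * exp (c * (2 / (1 - nu0)))).
  assert (Hbd : forall n N, Rabs (pi_partial a n N) <= M).
  { intros n N.
    assert (forall N, Rabs (prod_upto (pi_factor a n) N) <= exp (c * sumw (wgt nu0 n) N)).
    { induction N0 as [|N0 IH]; simpl.
      - apply (factor_bound a nu0 ha Hn hA n 0).
      - rewrite Rabs_mult, Rmult_plus_distr_l, exp_plus.
        apply Rmult_le_compat; try apply Rabs_pos; auto.
        apply (factor_bound a nu0 ha Hn hA n (S N0)). }
    unfold pi_partial, M. rewrite Rabs_mult, Rabs_right by lra.
    apply Rmult_le_compat_l; [lra|]. eapply Rle_trans; [apply H|].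
    destruct (Req_dec (c * sumw (wgt nu0 n) N) (c * (2 / (1 - nu0)))) as [E|E]; [rewrite E; lra|].
    left; apply exp_increasing.
    pose proof (sumw_bound nu0 n N Hn). assert (c * sumw (wgt nu0 n) N <= c * (2 / (1 - nu0))) by (apply Rmult_le_compat_l; lra). lra. }
  assert (Hcv : forall n, ex_finite_lim_seq (pi_partial a n)).
  { intros n. set (v := fun k => pi_partial a n (k + n)).
    assert (Hstep : forall k, v (S k) = v k * pi_factor a n (S (k + n))).
    { intros k. unfold v, pi_partial. simpl. ring. }
    assert (Hf : forall k, 1 <= pi_factor a n (S (k + n))).
    { intros k. apply (factor_bound a nu0 ha Hn hA n). lia. }
    assert (Hv : ex_finite_lim_seq v).
    { destruct (Rle_lt_dec 0 (v 0%nat)) as [H0|H0].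
      - assert (Hpos : forall k, 0 <= v k).
        { induction k; auto. rewrite Hstep. specialize (Hf k). nra. }
        apply (ex_finite_lim_seq_incr v M).
        + intros k. rewrite Hstep. specialize (Hf k). specialize (Hpos k). nra.
        + intros k. pose proof (Hbd n (k + n)%nat). unfold v. apply Rabs_le_between in H. lra.
      - assert (Hneg : forall k, v k <= 0).
        { induction k; [lra|]. rewrite Hstep. specialize (Hf k). nra. }
        apply (ex_finite_lim_seq_decr v (- M)).
        + intros k. rewrite Hstep. specialize (Hf k). specialize (Hneg k). nra.
        + intros k. pose proof (Hbd n (k + n)%nat). unfold v. apply Rabs_le_between in H. lra. }
    destruct Hv as [l Hl]. exists l. apply (is_lim_seq_incr_n _ n). exact Hl. }
  split; [exact Hcv|]. exists M. intros n.
  destruct (Hcv n) as [l Hl]. unfold pi_seq. rewrite (is_lim_seq_unique _ _ Hl). simpl.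
  pose proof (is_lim_seq_abs _ _ Hl) as Ha.
  pose proof (is_lim_seq_le _ _ _ _ (Hbd n) Ha (is_lim_seq_const M)) as Hle.
  simpl in Hle. exact Hle.
Qed.

Lemma phi_part (a : nat -> R) (b : nat -> C) (nu0 nu1 nu2 : R)
  (ha : forall n, 0 < a n) (hb : forall n, b n <> 0%C)
  (hnu : 0 < nu0 /\ nu0 < nu1 /\ nu1 < nu2 /\ nu2 < 1)
  (hA : forall n, a (S n) / a n < nu0)
  (hB : forall n, nu1 < Cmod (Cdiv (b (S n)) (b n)) < nu2) :
  spatially_exp_decays (phi a b).
Proof.
  destruct hnu as (H0 & H01 & H12 & H2).
  set (B := fun m => Cmod (b m)).
  assert (HBp : forall m, 0 < B m) by (intros m; apply Cmod_gt_0, hb).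
  assert (hB' : forall n, nu1 * B n < B (S n) < nu2 * B n).
  { intros n. specialize (hB n). rewrite Cmod_div in hB by apply hb. fold (B (S n)) (B n) in hB.
    pose proof (HBp n). destruct hB as [h1 h2]. split.
    - apply (Rmult_lt_reg_r (/ B n)); [apply Rinv_0_lt_compat; lra|].
      replace (nu1 * B n * / B n) with nu1 by (field; lra). exact h1.
    - apply (Rmult_lt_reg_r (/ B n)); [apply Rinv_0_lt_compat; lra|].
      replace (nu2 * B n * / B n) with nu2 by (field; lra). exact h2. }
  assert (RB : forall k m, nu1 ^ k * B m <= B (m + k)%nat <= nu2 ^ k * B m).
  { induction k as [|k IH]; intros m.
    - rewrite Nat.add_0_r; simpl; lra.
    - rewrite Nat.add_succ_r. specialize (IH m). specialize (hB' ((m+k)%nat)).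
      simpl. split; nra. }
  assert (RA := ratio_a a nu0 ha hA).
  assert (Hphi : forall i j, phi a b i j = (B i / B j) / (1 + a i / a j)).
  { intros i j. unfold phi. rewrite Cmod_div by apply hb. reflexivity. }
  set (mu := Rmax nu2 (nu0 / nu1)).
  assert (Hmu2 : nu2 <= mu) by apply Rmax_l.
  assert (Hmu1 : nu0 / nu1 <= mu) by apply Rmax_r.
  assert (Hq : 0 < nu0 / nu1 < 1).
  { split; [apply Rdiv_lt_0_compat; lra|]. apply (Rmult_lt_reg_r nu1); [lra|].
    field_simplify; lra. }
  exists 1, mu. split; [lra|]. split.
  { split; [lra|]. unfold mu. apply Rmax_lub_lt; lra. }
  intros i j. rewrite Hphi, Rmult_1_l.
  destruct (Nat.le_gt_cases j i) as [Hji|Hij].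
  -
    replace i with (j + (i - j))%nat by lia. set (k := (i - j)%nat).
    replace (nat_absdiff (j + k) j) with k by (unfold nat_absdiff; lia).
    destruct (RB k j) as [_ Hk]. pose proof (HBp j). pose proof (HBp (j+k)%nat).
    pose proof (ha j). pose proof (ha (j + k)%nat).
    assert (Hd : 1 <= 1 + a (j + k)%nat / a j).
    { assert (0 < a (j + k)%nat / a j) by (apply Rdiv_lt_0_compat; auto). lra. }
    assert (Hr : B (j + k)%nat / B j <= nu2 ^ k).
    { apply (Rmult_le_reg_r (B j)); auto. field_simplify; lra. }
    assert (0 < B (j + k)%nat / B j) by (apply Rdiv_lt_0_compat; auto).
    apply Rle_trans with (B (j + k)%nat / B j).
    { set (X := B (j + k)%nat / B j) in *. set (d := 1 + a (j + k)%nat / a j) in *.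
      replace (X / d) with (X * / d) by reflexivity.
      rewrite <- (Rmult_1_r X) at 2. apply Rmult_le_compat_l; [lra|].
      rewrite <- Rinv_1. apply Rinv_le_contravar; lra. }
    apply Rle_trans with (nu2 ^ k); auto. apply pow_incr; lra.
  - replace j with (i + (j - i))%nat by lia. set (k := (j - i)%nat).
    replace (nat_absdiff i (i + k)) with k by (unfold nat_absdiff; lia).
    destruct (RB k i) as [Hk _]. pose proof (RA k i) as Ha.
    pose proof (HBp i). pose proof (HBp (i+k)%nat).
    pose proof (ha i). pose proof (ha (i + k)%nat).
    assert (Hp0 : 0 < nu0 ^ k) by (apply pow_lt; lra).
    assert (Hp1 : 0 < nu1 ^ k) by (apply pow_lt; lra).
    apply Rle_trans with ((nu0 / nu1) ^ k); [|apply pow_incr; lra].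
    replace ((nu0/nu1)^k) with (nu0^k / nu1^k) by (unfold Rdiv; rewrite Rpow_mult_distr, pow_inv; reflexivity).
    set (Bi := B i) in *. set (Bj := B (i + k)%nat) in *.
    set (ai := a i) in *. set (aj := a (i + k)%nat) in *.
    replace (Bi / Bj / (1 + ai / aj)) with (Bi * aj / (Bj * (aj + ai))) by (field; lra).
    apply (Rmult_le_reg_r (Bj * (aj + ai) * nu1 ^ k)).
    { apply Rmult_lt_0_compat; [apply Rmult_lt_0_compat|]; lra. }
    field_simplify; [|lra|lra].
    assert (Bi * nu1 ^ k * aj <= Bj * aj) by nra.
    assert (Bj * aj <= Bj * (nu0 ^ k * ai)) by nra.
    nra.
Qed.

Theorem theorem5 (a : nat -> R) (b : nat -> C) (nu0 nu1 nu2 : R)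
  (ha : forall n, 0 < a n) (hb : forall n, b n <> 0%C)
  (hnu : 0 < nu0 /\ nu0 < nu1 /\ nu1 < nu2 /\ nu2 < 1)
  (hA : forall n, a (S n) / a n < nu0)
  (hB : forall n, nu1 < Cmod (Cdiv (b (S n)) (b n)) < nu2) :
  pi_in_linfty a /\ spatially_exp_decays (phi a b).
Proof.
  split.
  - apply (pi_part a nu0 ha); [lra|exact hA].
  - exact (phi_part a b nu0 nu1 nu2 ha hb hnu hA hB).
Qed.
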